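(* Let $\mathcal{D}$ be a finite set of $N\ge 2$ distinct real numbers, all in $[a,b]$, and let $0<\delta<1$. Suppose $\mathrm{LB}$ and $\mathrm{RB}$ are range-based lower and upper confidence bounders with the following validity property: for every finite set $\mathcal{D}'$ of reals contained in an interval $[a',b']$, every $k\ge 1$ with $k\le|\mathcal{D}'|$, and every $\delta'\in(0,1)$, if $T$ is a uniform without-replacement sample of size $k$ from $\mathcal{D}'$, then $\Pr[\mathrm{LB}(T,a',b',\delta') > \mathrm{AVG}(\mathcal{D}')] < \delta'$ and $\Pr[\mathrm{RB}(T,a',b',\delta') < \mathrm{AVG}(\mathcal{D}')] < \delta'$. Let $2 \le m \le N$ and let $S$ be a uniform without-replacement sample of size $m$ from $\mathcal{D}$. Define $$g_\ell = \mathrm{LB}\big(S\setminus\{\max S\},\, a,\, \max S,\, \delta/2\big),\qquad g_r = \mathrm{RB}\big(S\setminus\{\min S\},\, \min S,\, b,\, \delta/2\big).$$ Then $\Pr\big[\mathrm{AVG}(\mathcal{D}) \notin [g_\ell, g_r]\big] < \delta$. In particular $g_\ell$ does not depend on $b$ and $g_r$ does not depend on $a$.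
   Context: $\mathrm{AVG}(\mathcal{D})$ is the arithmetic mean of the elements of $\mathcal{D}$. For $x\in\mathbb{R}$, write $\mathcal{D}_{<x}=\mathcal{D}\cap(-\infty,x)$ and $\mathcal{D}_{>x}=\mathcal{D}\cap(x,\infty)$. A uniform without-replacement sample of size $k$ from a finite set is a uniformly random $k$-element subset (equivalently the first $k$ entries of a uniformly random ordering). *)

(* Defs.v *)
From HB Require Import structures.
From mathcomp Require Import all_boot all_order all_algebra finmap.
From mathcomp Require Import reals.
Set Implicit Arguments. Unset Strict Implicit. Unset Printing Implicit Defensive.
Import Order.TTheory GRing.Theory Num.Theory.
Local Open Scope ring_scope.
Local Open Scope fset_scope.

Section Defs.
Variable R : realType.

Definition avg (A : {fset R}) : R := (\sum_(x <- A) x) / (#|` A|)%:R.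

Definition fmax (A : {fset R}) : R :=
  \big[Order.max/head 0 (A : seq R)]_(x <- A) x.
Definition fmin (A : {fset R}) : R :=
  \big[Order.min/head 0 (A : seq R)]_(x <- A) x.

Definition toR (D : {fset R}) (T : {set D}) : {fset R} :=
  [fset val x | x in enum T].

Definition Pr_sample (D : {fset R}) (k : nat) (P : pred {fset R}) : R :=
  (#|[set T : {set D} | (#|T| == k) && P (toR T)]|)%:R / ('C(#|` D|, k))%:R.

Definition in_range (D : {fset R}) (a b : R) : Prop :=
  forall x, x \in D -> a <= x <= b.

Definition valid_LB (LB : {fset R} -> R -> R -> R -> R) : Prop :=
  forall (D' : {fset R}) (a' b' : R) (k : nat) (d' : R),
    in_range D' a' b' -> (1 <= k <= #|` D'|)%N -> 0 < d' < 1 ->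
    Pr_sample D' k (fun T => avg D' < LB T a' b' d') < d'.

Definition valid_RB (RB : {fset R} -> R -> R -> R -> R) : Prop :=
  forall (D' : {fset R}) (a' b' : R) (k : nat) (d' : R),
    in_range D' a' b' -> (1 <= k <= #|` D'|)%N -> 0 < d' < 1 ->
    Pr_sample D' k (fun T => RB T a' b' d' < avg D') < d'.

End Defs.

(* Main.v *)
Require Import Defs.
From HB Require Import structures.
From mathcomp Require Import all_boot all_order all_algebra finmap.
From mathcomp Require Import reals.
From mathcomp Require Import lra zify.
Import Order.TTheory GRing.Theory Num.Theory.
Local Open Scope ring_scope.
Local Open Scope fset_scope.
Section S.
Variable R : realType.
Implicit Types D S : {fset R}.

Lemma toR_card D (T : {set D}) : #|` toR T| = #|T|.
Proof.
rewrite /toR card_imfset /=; last exact: val_inj.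
rewrite cardE; apply: perm_size; apply: uniq_perm.
- exact: undup_uniq.
- exact: enum_uniq.
- by move=> x; rewrite mem_undup.
Qed.

Lemma mem_toR D (T : {set D}) x : (x \in toR T) = [exists y : D, (y \in T) && (val y == x)].
Proof.
apply/imfsetP/existsP => /=.
- by move=> [y]; rewrite mem_enum => yT ->; exists y; rewrite yT eqxx.
- by move=> [y /andP[yT /eqP <-]]; exists y; rewrite ?mem_enum.
Qed.

Lemma toR_sub D (T : {set D}) : toR T `<=` D.
Proof.
apply/fsubsetP => x; rewrite mem_toR => /existsP[y /andP[_ /eqP <-]].
exact: fsvalP.
Qed.

Lemma toR_inj D : injective (@toR R D).
Proof.
move=> T1 T2 E; apply/setP => y.
have := congr1 (fun S : {fset R} => val y \in S) E => /=.
rewrite !mem_toR.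
have H (T : {set D}) : [exists z : D, (z \in T) && (val z == val y)] = (y \in T).
  apply/existsP/idP.
    by case=> z /andP[zT /eqP /val_inj <-].
  by move=> yT; exists y; rewrite yT eqxx.
by rewrite !H.
Qed.

Definition cnt D k (P : pred {fset R}) : nat :=
  \sum_(S <- fpowerset D) ((#|`S| == k) && P S).

Lemma cntE D k (P : pred {fset R}) :
  #|[set T : {set D} | (#|T| == k) && P (toR T)]| = cnt D k P.
Proof.
have E : fpowerset D =i [fset toR T | T in [set: {set D}]].
  move=> S; rewrite fpowersetE; apply/idP/imfsetP.
  - move=> sub; exists [set y : D | val y \in S]; first by rewrite /= inE.
    apply/fsetP => x; rewrite mem_toR; apply/idP/existsP.
    + move=> xS; have xD := fsubsetP sub x xS.
      by exists [` xD]; rewrite inE xS eqxx.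
    + by case=> y /andP[]; rewrite inE => yS /eqP <-.
  - by case=> T _ ->; exact: toR_sub.
rewrite /cnt (eq_fbigl _ _ E) big_imfset /=; last by move=> ? ? _ _; exact: toR_inj.
rewrite big_enum /= -sum1_card [RHS]big_mkcond /= big_mkcond /=.
apply: eq_bigr => T _; rewrite !inE toR_card.
by case: (_ && _).
Qed.

Lemma cnt_bin D k : cnt D k xpredT = 'C(#|`D|, k).
Proof.
rewrite -cntE cardfE -card_draws; apply: eq_card => T; by rewrite !inE andbT.
Qed.

Lemma PrE D k (P : pred {fset R}) :
  Pr_sample D k P = (cnt D k P)%:R / (cnt D k xpredT)%:R.
Proof. by rewrite /Pr_sample cntE cnt_bin. Qed.

Lemma bigmax_mem (s : seq R) i0 : \big[Order.max/i0]_(x <- s) x \in i0 :: s.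
Proof.
elim: s => [|y s IH]; first by rewrite big_nil mem_head.
rewrite big_cons maxEle; case: ifP => _; last by rewrite !inE eqxx orbT.
by move: IH; rewrite !inE => /orP[->|->]; rewrite ?orbT.
Qed.

Lemma bigmax_ge (s : seq R) i0 y : y \in s -> y <= \big[Order.max/i0]_(x <- s) x.
Proof.
elim: s => [//|z s IH]; rewrite inE big_cons le_max => /orP[/eqP->|/IH->].
  by rewrite lexx.
by rewrite orbT.
Qed.

Lemma bigmin_mem (s : seq R) i0 : \big[Order.min/i0]_(x <- s) x \in i0 :: s.
Proof.
elim: s => [|y s IH]; first by rewrite big_nil mem_head.
rewrite big_cons minEle; case: ifP => _; first by rewrite !inE eqxx orbT.
by move: IH; rewrite !inE => /orP[->|->]; rewrite ?orbT.
Qed.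

Lemma bigmin_le (s : seq R) i0 y : y \in s -> \big[Order.min/i0]_(x <- s) x <= y.
Proof.
elim: s => [//|z s IH]; rewrite inE big_cons ge_min => /orP[/eqP->|/IH->].
  by rewrite lexx.
by rewrite orbT.
Qed.

Lemma head_in S y : y \in S -> head 0 (S : seq R) \in S.
Proof. move: S => [s i] /=. change (y \in s -> head 0 s \in s). by case: s i => //= a t _ _; exact: mem_head. Qed.

Lemma fmax_in S y : y \in S -> fmax S \in S.
Proof.
move=> yS; have := bigmax_mem S (head 0 (S : seq R)); rewrite /fmax inE.
by case/orP=> [/eqP->|//]; exact: head_in yS.
Qed.

Lemma fmin_in S y : y \in S -> fmin S \in S.
Proof.
move=> yS; have := bigmin_mem S (head 0 (S : seq R)); rewrite /fmin inE.
by case/orP=> [/eqP->|//]; exact: head_in yS.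
Qed.

Lemma fmax_ge S y : y \in S -> y <= fmax S.
Proof. exact: bigmax_ge. Qed.

Lemma fmin_le S y : y \in S -> fmin S <= y.
Proof. exact: bigmin_le. Qed.

Section Decomp.
Variables (lt : rel R) (ext : {fset R} -> R).
Hypothesis ext_in : forall S y, y \in S -> ext S \in S.
Hypothesis ext_lt : forall S y, y \in S -> y != ext S -> lt y (ext S).
Hypothesis lt_asym : forall x y, lt x y -> ~~ lt y x.
Arguments ext_in {S y}. Arguments ext_lt {S y}. Arguments lt_asym {x y}.

Definition Dl D x := [fset y in D | lt y x].

Lemma lt_irr x : ~~ lt x x.
Proof. by apply/negP => h; have := lt_asym h; rewrite h. Qed.

Lemma ext_U1 S x : (forall y, y \in S -> lt y x) -> ext (x |` S) = x.
Proof.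
move=> H; apply/eqP; apply/negPn/negP => ne.
have xin : x \in x |` S by rewrite fset1U1.
have h1 := ext_lt xin (ltac:(by rewrite eq_sym)).
have := ext_in xin; rewrite in_fset1U => /orP[/eqP e|eS].
  by move: ne; rewrite e eqxx.
by have := lt_asym h1; rewrite H.
Qed.

Lemma decomp D k (P : pred {fset R}) :
  cnt D k.+1 P = (\sum_(x <- D) cnt (Dl D x) k (fun S => P (x |` S)))%N.
Proof.
rewrite /cnt.
transitivity (\sum_(S <- fpowerset D) \sum_(x <- D)
   ((ext S == x) && ((#|`S| == k.+1) && P S)))%N.
  rewrite big_seq [RHS]big_seq; apply: eq_bigr => S; rewrite fpowersetE => SD.
  case F: ((#|`S| == k.+1) && P S); last by rewrite big1 // => x _; rewrite andbF.
  case/andP: F => /eqP cS _.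
  have [y yS] : exists y, y \in S.
    by apply/fset0Pn; apply: contra_eq_neq cS => ->; rewrite cardfs0.
  have eD := fsubsetP SD _ (ext_in yS).
  rewrite (bigD1_seq (ext S)) ?fset_uniq //= eqxx big1 // => x.
  by rewrite eq_sym => /negbTE ->.
rewrite exchange_big /= big_seq [RHS]big_seq; apply: eq_bigr => x xD.
set G := fun S => ((ext S == x) && ((#|`S| == k.+1) && P S) : nat).
have xnin S : S \in fpowerset (Dl D x) -> x \notin S.
  rewrite fpowersetE => /fsubsetP sub; apply/negP => /sub.
  by rewrite !inE => /andP[_ h]; move: (lt_irr x); rewrite h.
have ltS S : S \in fpowerset (Dl D x) -> forall y, y \in S -> lt y x.
  by rewrite fpowersetE => /fsubsetP sub y /sub; rewrite !inE => /andP[].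
transitivity (\sum_(S <- [fset x |` S | S in fpowerset (Dl D x)]) G S)%N.
  symmetry; apply: big_fset_incl.
    apply/fsubsetP => S /imfsetP [S' /= S'P ->]; rewrite fpowersetE.
    apply/fsubsetP => y; rewrite in_fset1U => /orP[/eqP ->//|].
    by move: S'P; rewrite fpowersetE => /fsubsetP sub /sub; rewrite !inE => /andP[].
  move=> S; rewrite fpowersetE => SD SnI; rewrite /G.
  case E: (ext S == x) => //=; case C: (#|`S| == k.+1) => //=.
  exfalso; move/negP: SnI; apply; apply/imfsetP; exists (S `\ x) => /=.
    rewrite fpowersetE; apply/fsubsetP => y; rewrite in_fsetD1 => /andP[yx yS].
    rewrite !inE (fsubsetP SD _ yS) /= -(eqP E); apply: ext_lt yS _.
    by rewrite (eqP E).
  have [y yS] : exists y, y \in S.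
    by apply/fset0Pn; apply: contra_eq_neq (eqP C) => ->; rewrite cardfs0.
  by rewrite fsetD1K // -(eqP E); exact: ext_in yS.
rewrite big_imfset /=; last first.
  move=> S1 S2 S1P S2P /= e.
  by rewrite -(fsetU1K (xnin _ S1P)) e fsetU1K // xnin.
rewrite big_seq [RHS]big_seq; apply: eq_bigr => S SP.
rewrite /G ext_U1 ?eqxx ?cardfsU1 ?(xnin _ SP) //=; exact: ltS.
Qed.
End Decomp.

Lemma cnt_mono D k (P Q : pred {fset R}) :
  (forall S, S `<=` D -> #|`S| = k -> P S -> Q S) -> (cnt D k P <= cnt D k Q)%N.
Proof.
move=> H; rewrite /cnt big_seq [X in (_ <= X)%N]big_seq; apply: leq_sum => S.
rewrite fpowersetE => sub; case: eqP => //= e.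
by case PS: (P S) => //; rewrite (H S).
Qed.

Lemma cnt_or D k (P Q : pred {fset R}) :
  (cnt D k (fun S => P S || Q S) <= cnt D k P + cnt D k Q)%N.
Proof.
rewrite /cnt -big_split /=; apply: leq_sum => S _.
by case: (_ == _); case: (P S); case: (Q S).
Qed.

Lemma cnt_small D k (P : pred {fset R}) : (#|`D| < k)%N -> cnt D k P = 0%N.
Proof.
move=> h; apply/eqP; rewrite -leqn0 -(bin_small h) -cnt_bin.
by apply: cnt_mono.
Qed.

Lemma sum_le_card (A : {fset R}) c : (forall y, y \in A -> y <= c) ->
  \sum_(y <- A) y <= (#|`A|)%:R * c.
Proof.
move=> H; rewrite card_fset_sum1 natr_sum mulr_suml [X in _ <= X]big_seq [X in X <= _]big_seq.
by apply: ler_sum => y yA; rewrite mul1r; exact: H.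
Qed.

Lemma sum_ge_card (A : {fset R}) c : (forall y, y \in A -> c <= y) ->
  (#|`A|)%:R * c <= \sum_(y <- A) y.
Proof.
move=> H; rewrite card_fset_sum1 natr_sum mulr_suml [X in _ <= X]big_seq [X in X <= _]big_seq.
by apply: ler_sum => y yA; rewrite mul1r; exact: H.
Qed.

Lemma avg_split D (p : pred R) :
  avg D = (\sum_(y <- [fset y in D | p y]) y + \sum_(y <- [fset y in D | ~~ p y]) y)
          / ((#|`[fset y in D | p y]|)%:R + (#|`[fset y in D | ~~ p y]|)%:R).
Proof.
rewrite /avg -natrD !card_fset_sum1 -big_fsetID.
by rewrite -(big_fsetID _ p).
Qed.

Lemma avg_le D (p : pred R) c : [fset y in D | p y] != fset0 ->
  (forall y, y \in D -> p y -> y <= c) -> (forall y, y \in D -> ~~ p y -> c <= y) ->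
  avg [fset y in D | p y] <= avg D.
Proof.
move=> ne H1 H2; rewrite (avg_split D p) {1}/avg.
set A := [fset y in D | p y]; set B := [fset y in D | ~~ p y].
have hA : \sum_(y <- A) y <= (#|`A|)%:R * c.
  by apply: sum_le_card => y; rewrite !inE => /andP[]; apply: H1.
have hB : (#|`B|)%:R * c <= \sum_(y <- B) y.
  by apply: sum_ge_card => y; rewrite !inE => /andP[]; apply: H2.
have nA : 0 < (#|`A|)%:R :> R by rewrite ltr0n cardfs_gt0.
have nB : 0 <= (#|`B|)%:R :> R by rewrite ler0n.
rewrite ler_pdivrMr // mulrAC ler_pdivlMr; last by lra.
set sA := \sum_(y <- A) y in hA *; set sB := \sum_(y <- B) y in hB *.
set a := (#|`A|)%:R in nA hA *; set b := (#|`B|)%:R in nB hB *.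
have h1 : 0 <= (a * c - sA) * b by apply: mulr_ge0 => //; rewrite subr_ge0.
have h2 : 0 <= (sB - b * c) * a by apply: mulr_ge0; rewrite ?subr_ge0 // ltW.
nra.
Qed.

Lemma avg_ge D (p : pred R) c : [fset y in D | p y] != fset0 ->
  (forall y, y \in D -> p y -> c <= y) -> (forall y, y \in D -> ~~ p y -> y <= c) ->
  avg D <= avg [fset y in D | p y].
Proof.
move=> ne H1 H2; rewrite (avg_split D p) {1}/avg.
set A := [fset y in D | p y]; set B := [fset y in D | ~~ p y].
have hA : (#|`A|)%:R * c <= \sum_(y <- A) y.
  by apply: sum_ge_card => y; rewrite !inE => /andP[]; apply: H1.
have hB : \sum_(y <- B) y <= (#|`B|)%:R * c.
  by apply: sum_le_card => y; rewrite !inE => /andP[]; apply: H2.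
have nA : 0 < (#|`A|)%:R :> R by rewrite ltr0n cardfs_gt0.
have nB : 0 <= (#|`B|)%:R :> R by rewrite ler0n.
rewrite ler_pdivlMr // mulrAC ler_pdivrMr; last by lra.
set sA := \sum_(y <- A) y in hA *; set sB := \sum_(y <- B) y in hB *.
set a := (#|`A|)%:R in nA hA *; set b := (#|`B|)%:R in nB hB *.
have h1 : 0 <= (sA - a * c) * b by apply: mulr_ge0 => //; rewrite subr_ge0.
have h2 : 0 <= (b * c - sB) * a by apply: mulr_ge0; rewrite ?subr_ge0 // ltW.
nra.
Qed.

Lemma fmax_lt S y : y \in S -> y != fmax S -> y < fmax S.
Proof. by move=> yS ne; rewrite lt_neqAle ne fmax_ge. Qed.

Lemma fmin_gt S y : y \in S -> y != fmin S -> fmin S < y.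
Proof. by move=> yS ne; rewrite lt_neqAle eq_sym ne fmin_le. Qed.

Lemma lt_as (x y : R) : x < y -> ~~ (y < x).
Proof. by move=> h; rewrite -leNgt ltW. Qed.

Lemma gt_as (x y : R) : y < x -> ~~ (x < y).
Proof. by move=> h; rewrite -leNgt ltW. Qed.

Lemma nonempty_card S k : (1 <= k)%N -> #|`S| = k -> exists y, y \in S.
Proof.
move=> k1 cS; apply/fset0Pn; rewrite -cardfs_gt0 cS; exact: k1.
Qed.

Lemma left_bound D a b d k (LB : {fset R} -> R -> R -> R -> R) :
  in_range D a b -> 0 < d < 1 -> valid_LB LB -> (1 <= k)%N -> (k < #|`D|)%N ->
  (cnt D k.+1 (fun S => avg D < LB (S `\ fmax S) a (fmax S) d))%:R
    < d * (cnt D k.+1 xpredT)%:R.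
Proof.
move=> HD dd VL k1 kD.
set lt := fun y x : R => y < x.
have Hin : forall S y, y \in S -> fmax S \in S by move=> S y; exact: fmax_in.
have Hlt : forall S y, y \in S -> y != fmax S -> lt y (fmax S) by move=> S y; exact: fmax_lt.
have Has : forall x y, lt x y -> ~~ lt y x by move=> x y; exact: lt_as.
rewrite (decomp _ _ Hin Hlt Has) (decomp _ _ Hin Hlt Has D k xpredT).
have h1 x : leq (cnt (Dl lt D x) k (fun S => avg D < LB ((x |` S) `\ fmax (x |` S)) a (fmax (x |` S)) d))
     (cnt (Dl lt D x) k (fun S => avg (Dl lt D x) < LB S a x d)).
  apply: cnt_mono => S sub cS.
  have [y yS] := nonempty_card _ _ k1 cS.
  have lts z : z \in S -> z < x by move/(fsubsetP sub); rewrite !inE => /andP[].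
  have xnS : x \notin S by apply/negP => /lts; rewrite ltxx.
  rewrite (ext_U1 _ _ Hin Hlt Has _ _ lts) fsetU1K // => h; apply: le_lt_trans h.
  apply: (avg_le _ (fun z => z < x) x).
  - by apply/fset0Pn; exists y; exact: (fsubsetP sub).
  - by move=> z _ /ltW.
  - by move=> z _; rewrite leNgt.
have Tlt x : (k <= #|`Dl lt D x|)%N ->
  (cnt (Dl lt D x) k (fun S => avg D < LB ((x |` S) `\ fmax (x |` S)) a (fmax (x |` S)) d))%:R
    < d * (cnt (Dl lt D x) k xpredT)%:R.
  move=> kx.
  have V := VL (Dl lt D x) a x k d.
  have := V _ _ dd; rewrite PrE ltr_pdivrMr; last by rewrite cnt_bin ltr0n bin_gt0.
  move=> /(_ _ _) h; apply: le_lt_trans (h _ _); first by rewrite ler_nat.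
  - move=> y; rewrite !inE => /andP[yD yx]; have /andP[ay _] := HD y yD.
    by rewrite ay ltW.
  - by rewrite k1 kx.
have Tle x :
  (cnt (Dl lt D x) k (fun S => avg D < LB ((x |` S) `\ fmax (x |` S)) a (fmax (x |` S)) d))%:R
    <= d * (cnt (Dl lt D x) k xpredT)%:R.
  case: (leqP k #|`Dl lt D x|) => h; first exact/ltW/Tlt.
  by rewrite !cnt_small // mulr0.
have [y0 y0D] : exists y, y \in D by apply: (nonempty_card D #|`D|) => //; lia.
have mD := fmax_in _ _ y0D.
rewrite !natr_sum mulr_sumr (bigD1_seq (fmax D)) ?fset_uniq //.
rewrite [X in _ < X](bigD1_seq (fmax D)) ?fset_uniq //=.
apply: ltr_leD; last by apply: ler_sum => x _; exact: Tle.
apply: Tlt.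
have -> : Dl lt D (fmax D) = D `\ fmax D.
  apply/fsetP => z; rewrite in_fsetD1 !inE /=.
  case zD: (z \in D); rewrite ?andbF //= andbT.
  by rewrite /lt lt_neqAle fmax_ge // andbT.
move: kD; rewrite (cardfsD1 (fmax D)) mD /=; lia.
Qed.
Lemma right_bound D a b d k (RB : {fset R} -> R -> R -> R -> R) :
  in_range D a b -> 0 < d < 1 -> valid_RB RB -> (1 <= k)%N -> (k < #|`D|)%N ->
  (cnt D k.+1 (fun S => RB (S `\ fmin S) (fmin S) b d < avg D))%:R
    < d * (cnt D k.+1 xpredT)%:R.
Proof.
move=> HD dd VR k1 kD.
set lt := fun y x : R => x < y.
have Hin : forall S y, y \in S -> fmin S \in S by move=> S y; exact: fmin_in.
have Hlt : forall S y, y \in S -> y != fmin S -> lt y (fmin S) by move=> S y; exact: fmin_gt.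
have Has : forall x y, lt x y -> ~~ lt y x by move=> x y; exact: gt_as.
rewrite (decomp _ _ Hin Hlt Has) (decomp _ _ Hin Hlt Has D k xpredT).
have h1 x : leq (cnt (Dl lt D x) k (fun S => RB ((x |` S) `\ fmin (x |` S)) (fmin (x |` S)) b d < avg D))
     (cnt (Dl lt D x) k (fun S => RB S x b d < avg (Dl lt D x))).
  apply: cnt_mono => S sub cS.
  have [y yS] := nonempty_card _ _ k1 cS.
  have lts z : z \in S -> x < z by move/(fsubsetP sub); rewrite !inE => /andP[].
  have xnS : x \notin S by apply/negP => /lts; rewrite ltxx.
  rewrite (ext_U1 _ _ Hin Hlt Has _ _ lts) fsetU1K // => h; apply: lt_le_trans h _.
  apply: (avg_ge _ (fun z => x < z) x).
  - by apply/fset0Pn; exists y; exact: (fsubsetP sub).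
  - by move=> z _ /ltW.
  - by move=> z _; rewrite leNgt.
have Tlt x : (k <= #|`Dl lt D x|)%N ->
  (cnt (Dl lt D x) k (fun S => RB ((x |` S) `\ fmin (x |` S)) (fmin (x |` S)) b d < avg D))%:R
    < d * (cnt (Dl lt D x) k xpredT)%:R.
  move=> kx.
  have V := VR (Dl lt D x) x b k d.
  have := V _ _ dd; rewrite PrE ltr_pdivrMr; last by rewrite cnt_bin ltr0n bin_gt0.
  move=> /(_ _ _) h; apply: le_lt_trans (h _ _); first by rewrite ler_nat.
  - move=> y; rewrite !inE => /andP[yD yx]; have /andP[_ yb] := HD y yD.
    by rewrite yb ltW.
  - by rewrite k1 kx.
have Tle x :
  (cnt (Dl lt D x) k (fun S => RB ((x |` S) `\ fmin (x |` S)) (fmin (x |` S)) b d < avg D))%:R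
    <= d * (cnt (Dl lt D x) k xpredT)%:R.
  case: (leqP k #|`Dl lt D x|) => h; first exact/ltW/Tlt.
  by rewrite !cnt_small // mulr0.
have [y0 y0D] : exists y, y \in D by apply: (nonempty_card D #|`D|) => //; lia.
have mD := fmin_in _ _ y0D.
rewrite !natr_sum mulr_sumr (bigD1_seq (fmin D)) ?fset_uniq //.
rewrite [X in _ < X](bigD1_seq (fmin D)) ?fset_uniq //=.
apply: ltr_leD; last by apply: ler_sum => x _; exact: Tle.
apply: Tlt.
have -> : Dl lt D (fmin D) = D `\ fmin D.
  apply/fsetP => z; rewrite in_fsetD1 !inE /=.
  case zD: (z \in D); rewrite ?andbF //= andbT.
  by rewrite /lt lt_neqAle eq_sym fmin_le // andbT.
move: kD; rewrite (cardfsD1 (fmin D)) mD /=; lia.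
Qed.
End S.

Arguments cnt {R}. Arguments PrE {R}. Arguments cnt_bin {R}. Arguments cnt_mono {R}.
Arguments cnt_or {R}. Arguments left_bound {R}. Arguments right_bound {R}.

Theorem mainTheorem3 (R : realType) (D : {fset R}) (a b delta : R) (m : nat)
    (LB RB : {fset R} -> R -> R -> R -> R) :
  (2 <= #|` D|)%N -> in_range D a b -> 0 < delta < 1 ->
  valid_LB LB -> valid_RB RB ->
  (2 <= m <= #|` D|)%N ->
  Pr_sample D m (fun S =>
    ~~ (LB (S `\ fmax S) a (fmax S) (delta / 2) <= avg D <=
        RB (S `\ fmin S) (fmin S) b (delta / 2))) < delta.
Proof.
move=> N2 HD dd VL VR /andP[m2 mN].
have dh : 0 < delta / 2 < 1.
  case/andP: dd => d0 d1; apply/andP; split.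
  - by rewrite divr_gt0.
  - rewrite ltr_pdivrMr // mul1r; apply: (lt_trans d1); lra.
case: m m2 mN => [//|k] k1 kN.
have hL := left_bound D a b (delta / 2) k LB HD dh VL k1 kN.
have hR := right_bound D a b (delta / 2) k RB HD dh VR k1 kN.
rewrite PrE ltr_pdivrMr; last by rewrite cnt_bin ltr0n bin_gt0.
have H2 : ((cnt D k.+1 (fun S => avg D < LB (S `\ fmax S) a (fmax S) (delta / 2)))%:R
   + (cnt D k.+1 (fun S => RB (S `\ fmin S) (fmin S) b (delta / 2) < avg D))%:R
   < delta * (cnt D k.+1 xpredT)%:R)%R.
  set C := (cnt D k.+1 xpredT)%:R in hL hR *; lra.
apply: le_lt_trans H2.
rewrite -natrD ler_nat; apply: leq_trans (cnt_or _ _ _ _); apply: cnt_mono => S _ _.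
by rewrite negb_and -!ltNge.
Qed.
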